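(* In the setting below, let $\tilde h\in L_2(s)$ and define $h^*(\theta)=\tilde h(t(\theta))$ for $\theta\in\Theta$. Then $h^*\in L_2(\nu)$ and $\tilde\Delta(\tilde h)=\Delta(h^* )$.
   Context: $(\mathcal{X},\mathcal{B})$ and $(\Theta,\mathcal{C})$ are Polish spaces with Borel $\sigma$-algebras; $P(\cdot\mid\theta)$ is a Markov kernel; $\nu$ is a $\sigma$-finite measure on $\Theta$; the marginal $M(B)=\int P(B\mid\theta)\nu(d\theta)$ is $\sigma$-finite; $Q(d\theta\mid x)$ is a Markov kernel with $P(dx\mid\theta)\nu(d\theta)=Q(d\theta\mid x)M(dx)$. The transition $R(C\mid\eta)=\int_{\mathcal{X}}Q(C\mid x)P(dx\mid\eta)$ defines the Dirichlet form $\Delta(h)=\frac12\int\int (h(\theta)-h(\eta))^2R(d\theta\mid\eta)\nu(d\eta)$ for $h\in L_2(\nu)$. Let $t:\Theta\to[0,\infty)$ be measurable and $s(A)=\nu(t^{-1}(A))$ on Borel sets of $[0,\infty)$. Assume there are disjoint Borel sets $A_i$, $i\ge1$, covering $[0,\infty)$ with $0<\nu(t^{-1}(A_i))<\infty$. Let $\pi(d\theta\mid a)$ be a Markov kernel with $\int f_2(t(\theta))f_1(\theta)\nu(d\theta)=\int_0^\infty f_2(a)\int f_1(\theta)\pi(d\theta\mid a)\,s(da)$ for all nonnegative measurable $f_1,f_2$. Set $\tilde P(dx\mid a)=\int P(dx\mid\theta)\pi(d\theta\mid a)$; its marginal under $s$ is $M$, and $\tilde Q(da\mid x)$ is a Markov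 kernel with $\tilde P(dx\mid a)s(da)=\tilde Q(da\mid x)M(dx)$. Let $\tilde R(da\mid b)=\int\tilde Q(da\mid x)\tilde P(dx\mid b)$ and $\tilde\Delta(\tilde h)=\frac12\int_0^\infty\int_0^\infty(\tilde h(a)-\tilde h(b))^2\tilde R(da\mid b)s(db)$. *)

(* Defs.v *)
From HB Require Import structures.
From mathcomp Require Import all_boot all_order all_algebra.
From mathcomp Require Import all_classical all_reals all_analysis measurable_realfun.
Set Implicit Arguments. Unset Strict Implicit. Unset Printing Implicit Defensive.
Import Order.TTheory GRing.Theory Num.Theory.
Local Open Scope classical_set_scope.
Local Open Scope ring_scope.

Definition L2fun d (T : measurableType d) (R : realType) (D : set T)
  (mu : {measure set T -> \bar R}) (f : T -> R) : Prop :=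
  measurable_fun D f /\
  (\int[mu]_(x in D) ((f x) ^+ 2)%:E < +oo)%E.

Definition dirichlet_form d (T : measurableType d) (R : realType)
  (D : set T) (mu : {measure set T -> \bar R})
  (K : T -> {measure set T -> \bar R}) (h : T -> R) : \bar R :=
  ((2^-1)%:E * \int[mu]_(eta in D) \int[K eta]_(th in D)
      ((h th - h eta) ^+ 2)%:E)%E.

(* Main.v *)
Require Import Defs.
From HB Require Import structures.
From mathcomp Require Import all_boot all_order all_algebra.
From mathcomp Require Import all_classical all_reals all_analysis measurable_realfun.
Set Implicit Arguments. Unset Strict Implicit. Unset Printing Implicit Defensive.
Import Order.TTheory GRing.Theory Num.Theory.
Local Open Scope classical_set_scope.
Local Open Scope ring_scope.
Local Open Scope ereal_scope.
Section lam.
Context d1 d2 (Y : measurableType d1) (X : measurableType d2) (R : realType).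
Variables (mu : {measure set Y -> \bar R}) (k : R.-fker Y ~> X).

Definition lam (E : set (Y * X)) := \int[mu]_y k y (xsection E y).

Lemma lam_mxs E : measurable E -> measurable_fun [set: Y] (fun y => k y (xsection E y)).
Proof. by move=> mE; apply: measurable_fun_xsection_finite_kernel; rewrite inE. Qed.

Let lam0 : lam set0 = 0.
Proof. by rewrite /lam; apply: integral0_eq => y _; rewrite xsection0 measure0. Qed.

Let lam_ge0 E : 0 <= lam E.
Proof. by apply: integral_ge0 => y _. Qed.

Let lam_sa : semi_sigma_additive lam.
Proof.
move=> F mF tF mU.
have -> : lam (\bigcup_n F n) = \sum_(0 <= i <oo) lam (F i).
  rewrite /lam -integral_nneseries//; last by move=> n; exact: lam_mxs.
  apply: eq_integral => y _; rewrite xsection_bigcup measure_semi_bigcup//.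
  - by move=> i; exact: measurable_xsection.
  - exact: trivIset_xsection.
  - by rewrite -xsection_bigcup; exact: measurable_xsection.
exact: is_cvg_nneseries.
Qed.

HB.instance Definition _ := isMeasure.Build _ _ _ lam lam0 lam_ge0 lam_sa.

End lam.
Section lamE.
Context d1 d2 (Y : measurableType d1) (X : measurableType d2) (R : realType).
Variables (mu : {measure set Y -> \bar R}) (k : R.-fker Y ~> X).
Import HBNNSimple.

Let lamE_indic E (mE : measurable E) :
  \int[lam mu k]_z (\1_E z)%:E = \int[mu]_y \int[k y]_x (\1_E (y, x))%:E.
Proof.
rewrite integral_indic// setIT /lam; apply: eq_integral => y _.
by have := kfcompkindic k mE => /(congr1 (fun f => f y)); rewrite /kfcomp/= => ->.
Qed.

Let mk2 (f : Y * X -> \bar R) : measurable_fun setT f -> (forall z, 0 <= f z) ->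
  measurable_fun [set: Y] (fun y => \int[k y]_x f (y, x)).
Proof. by move=> mf f0; exact: measurable_fun_integral_finite_kernel. Qed.

Let lamE_nnsfun (f : {nnsfun (Y * X) >-> R}) :
  \int[lam mu k]_z (f z)%:E = \int[mu]_y \int[k y]_x (f (y, x))%:E.
Proof.
under [in LHS]eq_integral do rewrite fimfunE -fsumEFin//.
rewrite ge0_integral_fsum//; last 2 first.
  - by move=> r; exact/measurable_EFinP/measurableT_comp.
  - by move=> r z _; rewrite EFinM nnfun_muleindic_ge0.
under [in RHS]eq_integral.
  move=> y _.
  under eq_integral.
    by move=> x _; rewrite fimfunE -fsumEFin//; over.
  rewrite /= ge0_integral_fsum//; last 2 first.
    - move=> r; apply/measurable_EFinP/measurableT_comp => //.
      apply/measurableT_comp => //; exact: measurable_pair1.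
    - by move=> r x _; rewrite EFinM nnfun_muleindic_ge0.
  over.
rewrite /= ge0_integral_fsum//; last 2 first.
  - move=> r; apply: (mk2 (f := fun z => (r * \1_(f @^-1` [set r]) z)%:E)).
      apply/measurable_EFinP/measurableT_comp => //.
    by move=> z; have := nnfun_muleindic_ge0 f r z; rewrite -EFinM lee_fin.
  - by move=> r y _; apply: integral_ge0 => x _; have := nnfun_muleindic_ge0 f r (y, x); rewrite -EFinM lee_fin.
apply: eq_fsbigr => r _.
transitivity (\int[lam mu k]_z (r%:E * (\1_(f @^-1` [set r]) z)%:E)).
  by apply: eq_integral => z _; rewrite EFinM.
transitivity (\int[mu]_y \int[k y]_x (r%:E * (\1_(f @^-1` [set r]) (y, x))%:E)); last first.
  by apply: eq_integral => y _; apply: eq_integral => x _; rewrite EFinM.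
have [r0|r0] := leP 0%R r.
  rewrite ge0_integralZl//; last by apply/measurable_EFinP; apply: measurable_indic.
  rewrite lamE_indic//.
  rewrite -ge0_integralZl//; last 2 first.
    - apply: (mk2 (f := fun z => (\1_(f @^-1` [set r]) z)%:E)) => //.
      by apply/measurable_EFinP; apply: measurable_indic.
    - by move=> y _; apply: integral_ge0 => x _; rewrite lee_fin.
  apply: eq_integral => y _; rewrite ge0_integralZl//.
  apply/measurable_EFinP/measurableT_comp => //; exact: measurable_pair1.
rewrite preimage_nnfun0//; transitivity (0 : \bar R).
  by apply: integral0_eq => z _; rewrite indic0 mule0.
by apply/esym/integral0_eq => y _; apply: integral0_eq => x _; rewrite indic0 mule0.
Qed.

Lemma lamE f : (forall z, 0 <= f z) -> measurable_fun [set: Y * X] f ->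
  \int[lam mu k]_z f z = \int[mu]_y \int[k y]_x f (y, x).
Proof.
move=> f0 mf.
pose f_ := nnsfun_approx measurableT mf.
transitivity (\int[lam mu k]_z (lim ((f_ n z)%:E @[n --> \oo]))).
  by apply/eq_integral => z _; apply/esym/cvg_lim => //=; exact: cvg_nnsfun_approx.
rewrite monotone_convergence//; last 3 first.
  by move=> n; exact/measurable_EFinP.
  by move=> n z _; rewrite lee_fin.
  by move=> z _ a b ab; rewrite lee_fin; exact/lefP/nd_nnsfun_approx.
rewrite (_ : (fun _ => _) =
    (fun n => \int[mu]_y (\int[k y]_x (f_ n (y, x))%:E)))//; last first.
  by apply/funext => n; rewrite lamE_nnsfun.
transitivity (\int[mu]_y lim ((\int[k y]_x (f_ n (y, x))%:E) @[n --> \oo])).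
  rewrite -monotone_convergence//; last 3 first.
  - move=> n; apply: (mk2 (f := fun z => (f_ n z)%:E)) => //; last by move=> z; rewrite lee_fin.
    exact/measurable_EFinP.
  - by move=> n y _; apply: integral_ge0 => // z _; rewrite lee_fin.
  - move=> y _ a b ab; apply: ge0_le_integral => //.
    + by move=> z _; rewrite lee_fin.
    + apply/measurable_EFinP/measurableT_comp => //; exact: measurable_pair1.
    + apply/measurable_EFinP/measurableT_comp => //; exact: measurable_pair1.
    + by move=> z _; rewrite lee_fin; exact/lefP/nd_nnsfun_approx.
apply: eq_integral => y _; rewrite -monotone_convergence//; last 3 first.
  - move=> n; apply/measurable_EFinP/measurableT_comp => //; exact: measurable_pair1.
  - by move=> n z _; rewrite lee_fin.
  - by move=> z _ a b ab; rewrite lee_fin; exact/lefP/nd_nnsfun_approx.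
by apply: eq_integral => z _; apply/cvg_lim => //; exact: cvg_nnsfun_approx.
Qed.

End lamE.

Lemma setI_closed_rect d1 d2 (T1 : measurableType d1) (T2 : measurableType d2) :
  @setI_closed (T1 * T2) [set A `*` B | A in d1.-measurable & B in d2.-measurable].
Proof.
move=> X Y [X1 mX1 [X2 mX2 <-{X}]] [Y1 mY1 [Y2 mY2 <-{Y}]].
exists (X1 `&` Y1); first exact: measurableI.
by exists (X2 `&` Y2); [exact: measurableI|rewrite setXI].
Qed.

Lemma lam_rect d1 d2 (Y : measurableType d1) (X : measurableType d2) (R : realType)
  (mu : {measure set Y -> \bar R}) (k : R.-fker Y ~> X) A B :
  measurable A -> measurable B ->
  lam mu k (A `*` B) = \int[mu]_(y in A) k y B.
Proof.
move=> mA mB; rewrite /lam [RHS]integral_mkcond; apply: eq_integral => y _.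
rewrite patchE; case: ifPn => yA; first by rewrite in_xsectionX.
by rewrite notin_xsectionX// measure0.
Qed.

Lemma swap_kernel d1 d2 (Y : measurableType d1) (X : measurableType d2) (R : realType)
  (mu : {measure set Y -> \bar R}) (k : R.-pker Y ~> X)
  (M : {measure set X -> \bar R}) (q : R.-pker X ~> Y)
  (F : nat -> set Y) (mF : forall n, measurable (F n))
  (covF : \bigcup_n F n = setT) (finF : forall n, mu (F n) < +oo)
  (H : forall A B, measurable A -> measurable B ->
     \int[mu]_(y in A) k y B = \int[M]_(x in B) q x A)
  (g : Y * X -> \bar R) : (forall z, 0 <= g z) -> measurable_fun setT g ->
  \int[mu]_y \int[k y]_x g (y, x) = \int[M]_x \int[q x]_y g (y, x).
Proof.
move=> g0 mg.
rewrite -lamE//.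
have -> : \int[M]_x \int[q x]_y g (y, x) = \int[M]_x \int[q x]_y (g \o unstable.swap) (x, y) by [].
rewrite -lamE//; last by apply: measurableT_comp => //; exact: measurable_swap.
rewrite -[RHS](ge0_integral_pushforward (@measurable_swap _ _ X Y) _ measurableT mg) //.
apply: eq_measure_integral; last first.
move=> ms A mA _.
apply: (measure_unique [set A `*` B | A in d1.-measurable & B in d2.-measurable]
   (fun n => F n `*` setT)) => //.
- exact: measurable_prod_measurableType.
- exact: setI_closed_rect.
- by move=> n; exists (F n) => //; exists setT.
- by rewrite -setX_bigcupl covF setXTT.
- move=> _ [A1 mA1 [B1 mB1 <-]].
  change (lam mu k (A1 `*` B1) = lam M q (unstable.swap @^-1` (A1 `*` B1))).
  rewrite lam_rect// /pushforward.
  have -> : unstable.swap @^-1` (A1 `*` B1) = B1 `*` A1.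
    by apply/seteqP; split => -[x y] [] ? ?; split.
  by rewrite lam_rect// H.
- move=> n; change (lam mu k (F n `*` setT) < +oo); rewrite lam_rect//.
  under eq_integral => y _ do rewrite prob_kernel.
  by rewrite integral_cst// mul1e.
- exact: measurable_swap.
- by move=> z; exact: g0.
Qed.
Definition rq (n : nat) : rat := odflt 0%R (unpickle n).

Definition GQ (R : realType) : set (set R) :=
  [set A | A = setT \/ exists n, A = `]ratr (rq n), +oo[%classic].

Lemma ray_bigcup (R : realType) (x : R) :
  `]x, +oo[%classic = \bigcup_n (if (x < ratr (rq n))%R then `]ratr (rq n), +oo[%classic else set0).
Proof.
apply/seteqP; split => y /=.
- rewrite in_itv /= andbT => xy.
  have [q] := rat_in_itvoo xy; rewrite in_itv /= => /andP[xq qy].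
  exists (pickle q) => //=; rewrite /rq pickleK /= xq /= in_itv /= qy //.
- case => n _; case: ifPn => xq; last by [].
  rewrite /= !in_itv/= !andbT => qy; exact: lt_trans xq qy.
Qed.

Lemma GQ_gen (R : realType) : @measurable _ R = <<s @GQ R >>.
Proof.
apply/seteqP; split.
- move=> A mA.
  have mA' : <<s @ocitv R >> A := mA.
  have E : <<s @ocitv R >> = <<s @RGenOInfty.G R >> := RGenOInfty.measurableE R.
  rewrite E in mA'; move: A mA' {mA}.
  apply: smallest_sub; first exact: smallest_sigma_algebra.
  move=> _ [x ->]; rewrite ray_bigcup.
  have [s0 _ sU] := smallest_sigma_algebra [set: R] (@GQ R).
  apply: sU => n.
  case: ifPn => _; last exact: s0.
  by apply: sub_sigma_algebra; right; exists n.
- apply: smallest_sub; first exact: sigma_algebra_measurable.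
  by move=> A [->|[n ->]]; [exact: measurableT | exact: measurable_itv].
Qed.

Lemma GQ_setI (R : realType) : setI_closed (@GQ R).
Proof.
move=> A B [->|[n ->]] [->|[m ->]].
- by left; rewrite setTI.
- by right; exists m; rewrite setTI.
- by right; exists n; rewrite setIT.
- right; have [nm|mn] := leP (ratr (rq n) : R) (ratr (rq m)).
  + exists m; apply/seteqP; split => y /=; rewrite !in_itv /= !andbT.
      by case.
    by move=> my; split => //; exact: (le_lt_trans nm my).
  + exists n; apply/seteqP; split => y /=; rewrite !in_itv /= !andbT.
      by case.
    by move=> ny; split => //; exact: (lt_trans mn ny).
Qed.

Lemma pker_le1 d1 d2 (X : measurableType d1) (Y : measurableType d2) (R : realType)
  (k : R.-pker X ~> Y) x A : measurable A -> k x A <= 1.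
Proof.
move=> mA; rewrite -(@prob_kernel _ _ _ _ _ k x).
by apply: le_measure => //; rewrite inE.
Qed.

Lemma ae_push d1 d2 (X : measurableType d1) (Th : measurableType d2) (R : realType)
  (M : {measure set X -> \bar R}) (G : nat -> set X) (mG : forall n, measurable (G n))
  (covG : \bigcup_n G n = setT) (finG : forall n, M (G n) < +oo)
  (Q : R.-pker X ~> Th) (Qt : R.-pker X ~> R) (t : Th -> R) (mt : measurable_fun setT t)
  (H : forall A B, measurable A -> measurable B ->
     \int[M]_(x in B) Qt x A = \int[M]_(x in B) Q x (t @^-1` A)) :
  {ae M, forall x, forall A, measurable A -> Qt x A = Q x (t @^-1` A)}.
Proof.
have mpre A : measurable A -> measurable (t @^-1` A).
  by move=> mA; rewrite -[X in measurable X]setTI; exact: mt.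
have step1 A : measurable A -> {ae M, forall x, Qt x A = Q x (t @^-1` A)}.
  move=> mA.
  have h n : {ae M, forall x, G n x -> Qt x A = Q x (t @^-1` A)}.
    apply: (@integral_ae_eq _ _ _ M (G n) (mG n) (fun x => Q x (t @^-1` A)) (fun x => Qt x A)).
    - apply/integrableP; split.
        exact/measurable_funTS/measurable_kernel.
      apply: (@le_lt_trans _ _ (\int[M]_(x in G n) (cst 1 x))).
        apply: ge0_le_integral => //.
        + apply: measurable_funTS; apply: measurableT_comp => //.
          exact: measurable_kernel.
        + by move=> x _; rewrite gee0_abs// pker_le1.
      by rewrite integral_cst// mul1e.
    - exact/measurable_funTS/measurable_kernel/mpre.
    - by move=> E EG mE; rewrite H.
  have := ae_foralln h; apply: filterS => x hx.
  have : (\bigcup_n G n) x by rewrite covG.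
  by case=> n _ Gx; exact: hx n Gx.
have := ae_foralln (fun n => step1 _ (@measurable_itv _ `]ratr (rq n), +oo[)).
apply: filterS => x hx A mA.
apply: (measure_unique (@GQ R) (fun=> setT) (GQ_gen R) (@GQ_setI R) _ _ (Qt x) (pushforward (Q x) t)).
- by move=> _; left.
- by rewrite bigcup_const.
- move=> _ [->|[n ->]].
    by change (Qt x setT = Q x (t @^-1` setT)); rewrite preimage_setT !prob_kernel.
  exact: hx.
- by move=> _; rewrite prob_kernel ltry.
- exact: mA.
Qed.

Lemma kcompE d0 d1 d2 (T0 : measurableType d0) (T1 : measurableType d1)
  (T2 : measurableType d2) (R : realType)
  (l : R.-pker T0 ~> T1) (k : R.-pker T1 ~> T2) (K : R.-pker T0 ~> T2)
  (HK : forall x C, measurable C -> K x C = \int[l x]_y k y C) x (f : T2 -> \bar R) :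
  (forall z, 0 <= f z) -> measurable_fun setT f ->
  \int[K x]_z f z = \int[l x]_y \int[k y]_z f z.
Proof.
move=> f0 mf.
transitivity (\int[kcomp l (@kernel.kernel_snd _ _ _ T0 T1 T2 R k) x]_z f z).
  by apply: eq_measure_integral => A mA _; rewrite HK.
by rewrite integral_kcomp.
Qed.

Lemma mint2 d0 d1 d2 (T0 : measurableType d0) (T1 : measurableType d1)
  (T2 : measurableType d2) (R : realType) (k : R.-pker T1 ~> T2)
  (f : T0 * T2 -> \bar R) : (forall z, 0 <= f z) -> measurable_fun setT f ->
  measurable_fun [set: T0 * T1] (fun p => \int[k p.2]_z f (p.1, z)).
Proof.
move=> f0 mf.
apply: (measurable_fun_integral_finite_kernel
  (fun pz : (T0 * T1) * T2 => f (pz.1.1, pz.2)) (@kernel.kernel_snd _ _ _ T0 T1 T2 R k)) => //.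
apply: measurableT_comp => //; apply: measurable_fun_pair => //.
exact: measurableT_comp.
Qed.

Lemma pker_compl d1 d2 (X : measurableType d1) (Y : measurableType d2) (R : realType)
  (k : R.-pker X ~> Y) x A : measurable A -> k x A = 1 -> k x (~` A) = 0.
Proof.
move=> mA kA.
have h : k x setT = k x (setT `\` A) + k x (setT `&` A) := measureDI (k x) measurableT mA.
move: h; rewrite setTI (@prob_kernel _ _ _ _ _ k x) kA setTD => h.
by have := congr1 (fun z => z - 1) h; rewrite addeK // subee.
Qed.

Unset Implicit Arguments. Set Strict Implicit. Set Printing Implicit Defensive.

Theorem theorem3p3 (R : realType)
  (dX : measure_display) (X : measurableType dX)
  (dT : measure_display) (Th : measurableType dT)
  (* P(dx | theta) : Markov kernel from Theta to X *)
  (P : R.-pker Th ~> X)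
  (* nu : sigma-finite measure on Theta *)
  (nu : {measure set Th -> \bar R})
  (nu_sf : sigma_finite [set: Th] nu)
  (* M : the marginal, assumed sigma-finite *)
  (M : {measure set X -> \bar R})
  (M_def : forall B, measurable B -> M B = \int[nu]_th P th B)
  (M_sf : sigma_finite [set: X] M)
  (* Q(dtheta | x) : Markov kernel with P(dx|th) nu(dth) = Q(dth|x) M(dx) *)
  (Q : R.-pker X ~> Th)
  (PQ : forall (A : set Th) (B : set X), measurable A -> measurable B ->
     \int[nu]_(th in A) P th B = \int[M]_(x in B) Q x A)
  (* R(C | eta) = \int_X Q(C | x) P(dx | eta) *)
  (Rk : R.-pker Th ~> Th)
  (Rk_def : forall eta C, measurable C -> Rk eta C = \int[P eta]_x Q x C)
  (* t : Theta -> [0, oo) measurable, s = nu o t^-1 on Borel sets *)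
  (t : Th -> R) (t_ge0 : forall th, (0 <= t th)%R)
  (t_meas : measurable_fun [set: Th] t)
  (s : {measure set R -> \bar R})
  (s_def : forall A, measurable A -> s A = nu (t @^-1` A))
  (* disjoint Borel A_i covering [0,oo) with 0 < s(A_i) < oo *)
  (Hpart : exists Ai : nat -> set R,
     (forall i, measurable (Ai i)) /\ trivIset [set: nat] Ai /\
     \bigcup_i Ai i = `[0%R, +oo[%classic /\
     (forall i, 0 < nu (t @^-1` Ai i) < +oo))
  (* pi(dtheta | a) : Markov kernel (disintegration of nu along t) *)
  (pi : R.-pker R ~> Th)
  (pi_dis : forall (f1 : Th -> \bar R) (f2 : R -> \bar R),
     (forall th, 0 <= f1 th) -> measurable_fun [set: Th] f1 ->
     (forall a, 0 <= f2 a) -> measurable_fun [set: R] f2 ->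
     \int[nu]_th (f2 (t th) * f1 th) =
     \int[s]_(a in `[0%R, +oo[%classic) (f2 a * \int[pi a]_th f1 th))
  (* Ptilde(dx | a) = \int P(dx | theta) pi(dtheta | a) *)
  (Pt : R.-pker R ~> X)
  (Pt_def : forall a B, measurable B -> Pt a B = \int[pi a]_th P th B)
  (* Qtilde(da | x) : Markov kernel into [0,oo) with
     Ptilde(dx|a) s(da) = Qtilde(da|x) M(dx) *)
  (Qt : R.-pker X ~> R)
  (Qt_supp : forall x, Qt x `[0%R, +oo[%classic = 1)
  (PQt : forall (A : set R) (B : set X), measurable A -> A `<=` `[0%R, +oo[%classic ->
     measurable B ->
     \int[s]_(a in A) Pt a B = \int[M]_(x in B) Qt x A)
  (* Rtilde(da | b) = \int Qtilde(da | x) Ptilde(dx | b) *)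
  (Rt : R.-pker R ~> R)
  (Rt_def : forall b A, measurable A -> Rt b A = \int[Pt b]_x Qt x A)
  (ht : R -> R) (ht_L2 : L2fun (`[0%R, +oo[%classic : set R) s ht) :
  L2fun [set: Th] nu (fun th => ht (t th)) /\
  dirichlet_form (`[0%R, +oo[%classic : set R) s Rt ht =
  dirichlet_form [set: Th] nu Rk (fun th => ht (t th)).
Proof.
set I := `[0%R, +oo[%classic : set R.
have mI : measurable I by exact: measurable_itv.
have tI th : I (t th) by rewrite /I /= in_itv /= andbT t_ge0.
have mpre A : measurable A -> measurable (t @^-1` A).
  by move=> mA; rewrite -[X in measurable X]setTI; exact: t_meas.
have preI : t @^-1` (~` I) = set0.
  by apply/seteqP; split => th //=; move=> /(_ (tI th)).
have sNI : s (~` I) = 0 by rewrite s_def ?preI ?measure0//; exact: measurableC.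
case: ht_L2 => mht htfin.
pose htI := fun a => if a \in I then ht a else 0%R.
have mhtI : measurable_fun setT htI.
  move=> _ Y mY; rewrite setTI.
  have -> : htI @^-1` Y = (I `&` ht @^-1` Y) `|` (~` I `&` [set _ | Y 0%R]).
    apply/seteqP; split => a /=; rewrite /htI; case: ifPn => [/set_mem aI|aI].
    - by move=> ?; left.
    - by move=> ?; right; split => // Ia; move: aI; rewrite mem_set.
    - by case => -[].
    - by case => -[] // /mem_set; rewrite (negbTE aI).
  apply: measurableU; first exact: mht.
  apply: measurableI; first exact: measurableC.
  by case: (pselect (Y 0%R)) => Y0; [rewrite (_ : [set _ | _] = setT) |
    rewrite (_ : [set _ | _] = set0)] => //; apply/seteqP; split.
have htIE a : I a -> htI a = ht a by move=> Ia; rewrite /htI mem_set.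
have intA d0 (T0 : measurableType d0) (mu : {measure set T0 -> \bar R}) (A : set T0) f :
    \int[mu]_(x in A) f x = \int[mu]_x ((\1_A x)%:E * f x).
  rewrite integral_mkcond; apply: eq_integral => x _; rewrite patchE indicE.
  by case: (x \in A); rewrite ?mul1e ?mul0e.
split.
  have hE : (fun th => ht (t th)) = htI \o t by apply/funext => th /=; rewrite htIE.
  split; first by rewrite hE; exact: measurableT_comp.
  rewrite (_ : \int[nu]_(x in _) _ = \int[nu]_th ((fun a => ((htI a)^+2)%:E) (t th) * (fun=> 1) th)); last first.
    by apply: eq_integral => th _; rewrite mule1 htIE.
  rewrite (pi_dis (fun=> 1) (fun a => ((htI a)^+2)%:E)) //; last 2 first.
  - by move=> a; rewrite lee_fin sqr_ge0.
  - by apply/measurable_EFinP; exact: measurable_funX.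
  rewrite (_ : \int[s]_(a in _) _ = \int[s]_(a in I) ((ht a)^+2)%:E) //.
  apply: eq_integral => a /set_mem Ia.
  by rewrite (integral_cst (pi a) measurableT 1) prob_kernel !mule1 htIE.
rewrite /dirichlet_form; congr (_ * _).
pose Fz (p : R * R) : \bar R := ((\1_I p.1 * \1_I p.2 * (htI p.1 - htI p.2) ^+ 2)%R)%:E.
have ind0 (A : set R) x : (0 <= \1_A x :> R)%R by rewrite indicE; case: (x \in A).
have Fz0 p : 0 <= Fz p.
  by rewrite /Fz lee_fin; apply: mulr_ge0; [apply: mulr_ge0; exact: ind0|exact: sqr_ge0].
have mFz : measurable_fun setT Fz.
  apply/measurable_EFinP; apply: measurable_funM; first apply: measurable_funM.
  - by apply: measurableT_comp => //; exact: measurable_indic.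
  - by apply: measurableT_comp => //; exact: measurable_indic.
  apply: measurable_funX; apply: measurable_funB.
  - exact: measurableT_comp.
  - exact: measurableT_comp.
have FzE a b : I a -> I b -> Fz (a, b) = ((ht a - ht b) ^+ 2)%:E.
  by move=> Ia Ib; rewrite /Fz /= !indicE !mem_set// !mul1r !htIE.
have FzNa a b : ~ I a -> Fz (a, b) = 0.
  by move=> Ia; rewrite /Fz /= (_ : \1_I a = 0%R) ?mul0r// indicE memNset.
have FzNb a b : ~ I b -> Fz (a, b) = 0.
  by move=> Ib; rewrite /Fz /= (_ : \1_I b = 0%R) ?mulr0 ?mul0r// indicE memNset.
case: nu_sf => nF nFcov nFp.
case: M_sf => MF MFcov MFp.
case: Hpart => Ai [mAi [_ [covAi finAi]]].
pose sF (n : nat) : set R := if n is n'.+1 then Ai n' else `]-oo, 0%R[%classic.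
have msF n : measurable (sF n) by case: n => [|n] /=; [exact: measurable_itv | exact: mAi].
have sFcov : \bigcup_n sF n = setT.
  apply/seteqP; split => // a _.
  have [a0|a0] := ltP a 0%R.
    by exists 0%N => //=; rewrite in_itv /= a0.
  have : I a by rewrite /I /= in_itv /= a0.
  by rewrite /I -covAi => -[n _ An]; exists n.+1.
have sFfin n : s (sF n) < +oo.
  case: n => [|n] /=.
    rewrite s_def; last exact: measurable_itv.
    rewrite (_ : t @^-1` _ = set0) ?measure0 //.
    by apply/seteqP; split => th //=; rewrite in_itv /= ltNge t_ge0.
  by rewrite s_def //; case/andP: (finAi n).
have sI g : measurable_fun setT g -> \int[s]_(a in I) g a = \int[s]_a g a.
  move=> mg; rewrite -[in RHS](setUv I) integral_setU //; last 3 first.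
  - exact: measurableC.
  - by rewrite setUv.
  - by rewrite /disj_set setICr.
  rewrite (null_set_integral (N := ~` I)) ?adde0 //; first exact: measurableC.
  exact: measurable_funTS.
have QNI x : Qt x (~` I) = 0 by apply: pker_compl.
have PQt' A B : measurable A -> measurable B ->
    \int[s]_(a in A) Pt a B = \int[M]_(x in B) Qt x A.
  move=> mA mB.
  transitivity (\int[s]_(a in A `&` I) Pt a B).
    rewrite intA -sI; last first.
      apply: emeasurable_funM; first by apply/measurable_EFinP; exact: measurable_indic.
      exact: measurable_kernel.
    rewrite intA [RHS]intA; apply: eq_integral => a _.
    rewrite indicI /= !indicE; case: (a \in A); case: (a \in I);
      by rewrite /= ?mul1r ?mul0r ?mul1e ?mul0e.
  rewrite (PQt (A `&` I) B (measurableI _ _ mA mI) (fun a (h : (A `&` I) a) => h.2) mB).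
  apply: eq_integral => x _.
  have -> : Qt x A = Qt x (A `\` I) + Qt x (A `&` I) := measureDI (Qt x) mA mI.
  suff -> : Qt x (A `\` I) = 0 by rewrite add0e.
  by apply: (subset_measure0 (B := ~` I)); [exact: measurableD|exact: measurableC| move=> a [] | exact: QNI].
have RtE b : \int[Rt b]_a Fz (a, b) = \int[Pt b]_x \int[Qt x]_a Fz (a, b).
  rewrite (kcompE (K := Rt) (l := Pt) (k := Qt) Rt_def) //.
  exact: (measurable_fun_pair1 (f := Fz)).
have RkE eta : \int[Rk eta]_th Fz (t th, t eta) = \int[P eta]_x \int[Q x]_th Fz (t th, t eta).
  rewrite (kcompE (K := Rk) (l := P) (k := Q) Rk_def) //.
  exact: (measurableT_comp (measurable_fun_pair1 (t eta) mFz) t_meas).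
have mgL : measurable_fun setT (fun p : R * X => \int[Qt p.2]_a Fz (a, p.1)).
  apply: (mint2 Qt (f := fun p : R * R => Fz (p.2, p.1))) => //.
  apply: measurableT_comp; first exact: mFz.
  exact: measurable_swap.
have mgR : measurable_fun setT (fun p : Th * X => \int[Q p.2]_th Fz (t th, t p.1)).
  apply: (mint2 Q (f := fun p : Th * Th => Fz (t p.2, t p.1))) => //.
  apply: measurableT_comp mFz _; apply: measurable_fun_pair.
    exact: measurableT_comp t_meas measurable_snd.
  exact: measurableT_comp t_meas measurable_fst.
transitivity (\int[s]_b \int[Rt b]_a Fz (a, b)).
  rewrite integral_mkcond; apply: eq_integral => b _; rewrite patchE.
  case: ifPn => [/set_mem Ib|Ib].
    rewrite integral_mkcond; apply: eq_integral => a _; rewrite patchE.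
    case: ifPn => [/set_mem Ia|Ia]; first by rewrite FzE.
    by rewrite FzNa // => /mem_set; rewrite (negbTE Ia).
  by apply/esym/integral0_eq => a _; rewrite FzNb // => /mem_set; rewrite (negbTE Ib).
transitivity (\int[s]_b \int[Pt b]_x \int[Qt x]_a Fz (a, b)).
  by apply: eq_integral => b _; rewrite RtE.
transitivity (\int[M]_x \int[Qt x]_b \int[Qt x]_a Fz (a, b)).
  exact: (swap_kernel msF sFcov sFfin PQt' (g := fun p : R * X => \int[Qt p.2]_a Fz (a, p.1))
    (fun p => integral_ge0 _ (fun a _ => Fz0 (a, p.1))) mgL).
transitivity (\int[M]_x \int[Q x]_eta \int[Q x]_th Fz (t th, t eta)); last first.
  symmetry.
  transitivity (\int[nu]_eta \int[P eta]_x \int[Q x]_th Fz (t th, t eta)).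
    apply: eq_integral => eta _; rewrite -RkE.
    by apply: eq_integral => th _; rewrite FzE.
  exact: (swap_kernel (fun n => (nFp n).1) (esym nFcov) (fun n => (nFp n).2) PQ
    (g := fun p : Th * X => \int[Q p.2]_th Fz (t th, t p.1))
    (fun p => integral_ge0 _ (fun a _ => Fz0 _)) mgR).
have Hpush A B : measurable A -> measurable B ->
    \int[M]_(x in B) Qt x A = \int[M]_(x in B) Q x (t @^-1` A).
  move=> mA mB; rewrite -PQt' // -PQ //; last exact: mpre.
  rewrite [LHS]intA -sI; last first.
    apply: emeasurable_funM; first by apply/measurable_EFinP; exact: measurable_indic.
    exact: measurable_kernel.
  transitivity (\int[s]_(a in I) ((\1_A a)%:E * \int[pi a]_th P th B)).
    by apply: eq_integral => a _; rewrite Pt_def.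
  rewrite -(pi_dis (fun th => P th B) (fun a => (\1_A a)%:E)) //.
  - exact: measurable_kernel.
  - by apply/measurable_EFinP; exact: measurable_indic.
have MFm n : measurable (MF n) by case: (MFp n).
have MFfin n : M (MF n) < +oo by case: (MFp n).
have hae := ae_push MFm (esym MFcov) MFfin t_meas Hpush.
apply: ae_eq_integral => //.
- apply: (measurable_fun_integral_finite_kernel
    (fun p : X * R => \int[Qt p.1]_a Fz (a, p.2)) Qt).
    by move=> p; apply: integral_ge0 => a _.
  change (measurable_fun setT ((fun p : R * X => \int[Qt p.2]_a Fz (a, p.1)) \o unstable.swap)).
  apply: measurableT_comp; first exact: mgL.
  exact: measurable_swap.
- apply: (measurable_fun_integral_finite_kernel
    (fun p : X * Th => \int[Q p.1]_th Fz (t th, t p.2)) Q).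
    by move=> p; apply: integral_ge0 => a _.
  change (measurable_fun setT ((fun p : Th * X => \int[Q p.2]_th Fz (t th, t p.1)) \o unstable.swap)).
  apply: measurableT_comp; first exact: mgR.
  exact: measurable_swap.
apply: filterS hae => x hx _.
have push (h : R -> \bar R) : measurable_fun setT h -> (forall z, 0 <= h z) ->
    \int[Qt x]_a h a = \int[Q x]_th h (t th).
  move=> mh h0.
  transitivity (\int[pushforward (Q x) t]_a h a).
    by apply: eq_measure_integral => A mA _; exact: hx.
  by rewrite (ge0_integral_pushforward t_meas (Q x) measurableT mh) // preimage_setT.
rewrite (push (fun b => \int[Qt x]_a Fz (a, b))) //; last 2 first.
  - exact: (measurable_fun_pair1 x mgL).
  - by move=> b; apply: integral_ge0 => a _.
apply: eq_integral => eta _.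
rewrite (push (fun a => Fz (a, t eta))) //.
exact: measurable_fun_pair1.
Qed.
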